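(* Let $X$ be a random variable geometrically distributed with parameter $f \in (0,1]$, i.e. $\Pr[X = k] = (1-f)^{k-1} f$ for $k \in \{1,2,\dots\}$. Then with $d_1 = 4/\pi$, $$\sqrt{\mathbb{E}[X]} \le \mathbb{E}\left[\sqrt{d_1 X}\right]$$ for all $f \in (0,1]$. *)

(* Defs.v *)
From Stdlib Require Import Reals.
From Coquelicot Require Import Coquelicot.
Open Scope R_scope.

Definition geom_pmf (f : R) (k : nat) : R := (1 - f) ^ (k - 1) * f.

(* Expectation E[g(X)] for X ~ Geom(f): the series sum_{k>=1} Pr[X=k] g(k)
   (summation index n = k - 1). *)
Definition geom_expect (f : R) (g : nat -> R) : R :=
  Series (fun n : nat => geom_pmf f (S n) * g (S n)).

Definition d1_const : R := 4 / PI.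

(* Main.v *)
Require Import Defs.
From Stdlib Require Import Reals Lra Lia.
From Coquelicot Require Import Coquelicot.
Open Scope R_scope.

Definition Iw (n:nat) := RInt (fun x => sin x ^ n) 0 (PI/2).

Lemma ex_Iw n : ex_RInt (fun x => sin x ^ n) 0 (PI/2).
Proof.
  apply (ex_RInt_continuous (V:=R_CompleteNormedModule)); intros z _.
  refine (ex_derive_continuous (K:=R_AbsRing) (V:=R_NormedModule) _ _ _); auto_derive; auto.
Qed.

Lemma Iw_rec n : INR (n+2) * Iw (n+2) = INR (n+1) * Iw n.
Proof.
  assert (H : is_RInt (fun x => INR (n+2) * sin x ^ (n+2) - INR (n+1) * sin x ^ n) 0 (PI/2)
            (minus ((fun x => - cos x * sin x ^ (n+1)) (PI/2)) ((fun x => - cos x * sin x ^ (n+1)) 0))).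
  { apply (is_RInt_derive (V:=R_CompleteNormedModule) (fun x => - cos x * sin x ^ (n+1)) (fun x => INR (n+2) * sin x ^ (n+2) - INR (n+1) * sin x ^ n)).
    - intros x _. auto_derive; auto.
      replace (n+1)%nat with (S n) by lia. replace (n+2)%nat with (S (S n)) by lia.
      rewrite !S_INR. simpl pow. replace (pred (S n)) with n by lia.
      pose proof (sin2_cos2 x). unfold Rsqr in H.
      assert (Hc: cos x * cos x = 1 - sin x * sin x) by lra. replace (- cos x * (1 * cos x * ((INR n + 1) * sin x ^ n))) with (- (cos x * cos x) * ((INR n + 1) * sin x ^ n)) by ring. rewrite Hc. ring.
    - intros x _. refine (ex_derive_continuous (K:=R_AbsRing) (V:=R_NormedModule) _ _ _); auto_derive; auto. }
  cbv beta in H. rewrite cos_PI2, sin_0, cos_0 in H.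
  replace (minus _ _) with 0 in H by (unfold minus, plus, opp; simpl; replace (n+1)%nat with (S n) by lia; simpl; ring).
  assert (H2 : is_RInt (fun x => INR (n+2) * sin x ^ (n+2) - INR (n+1) * sin x ^ n) 0 (PI/2)
            (INR (n+2) * Iw (n+2) - INR (n+1) * Iw n)).
  { apply (is_RInt_minus (V:=R_CompleteNormedModule) (fun x => INR (n+2) * sin x ^ (n+2)) (fun x => INR (n+1) * sin x ^ n));
    apply (is_RInt_scal (V:=R_CompleteNormedModule) (fun x => sin x ^ _)); apply (RInt_correct (V:=R_CompleteNormedModule)); apply ex_Iw. }
  apply (is_RInt_unique (V:=R_CompleteNormedModule)) in H.
  apply (is_RInt_unique (V:=R_CompleteNormedModule)) in H2.
  lra.
Qed.

Lemma Iw0 : Iw 0 = PI/2.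
Proof.
  unfold Iw. simpl. rewrite (RInt_const (V:=R_CompleteNormedModule)).
  unfold scal; simpl; unfold mult; simpl. ring.
Qed.

Lemma Iw1 : Iw 1 = 1.
Proof.
  unfold Iw.
  assert (H : is_RInt (fun x => sin x ^ 1) 0 (PI/2) (minus ((fun x => - cos x) (PI/2)) ((fun x => - cos x) 0))).
  { apply (is_RInt_derive (V:=R_CompleteNormedModule) (fun x => - cos x) (fun x => sin x ^ 1)).
    - intros x _. auto_derive; auto. ring.
    - intros x _. refine (ex_derive_continuous (K:=R_AbsRing) (V:=R_NormedModule) _ _ _); auto_derive; auto. }
  cbv beta in H. rewrite cos_PI2, cos_0 in H.
  apply (is_RInt_unique (V:=R_CompleteNormedModule)) in H. rewrite H.
  unfold minus, plus, opp; simpl. ring.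
Qed.

Lemma Iw_mono n : Iw (S n) <= Iw n.
Proof.
  unfold Iw. apply RInt_le.
  - pose proof PI2_RGT_0; lra.
  - apply ex_Iw.
  - apply ex_Iw.
  - intros x Hx. pose proof PI2_Rlt_PI.
    assert (0 <= sin x) by (apply sin_ge_0; lra).
    assert (sin x <= 1) by apply (proj2 (SIN_bound x)).
    simpl. rewrite <- (Rmult_1_l (sin x ^ n)) at 2.
    apply Rmult_le_compat_r; auto. apply pow_le; auto.
Qed.


Fixpoint aw (k : nat) : R := match k with O => 1 | S k => aw k * ((2 * INR k + 1) / (2 * INR k + 2)) end.

Lemma aw_pos k : 0 < aw k.
Proof.
  induction k; simpl. lra.
  apply Rmult_lt_0_compat; auto. pose proof (pos_INR k).
  apply Rdiv_lt_0_compat; lra.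
Qed.

Lemma aw_le1 k : aw k <= 1.
Proof.
  induction k; simpl. lra. pose proof (pos_INR k). pose proof (aw_pos k).
  assert ((2 * INR k + 1) / (2 * INR k + 2) <= 1).
  { unfold Rdiv. apply (Rmult_le_reg_r (2*INR k+2)); [lra|]. rewrite Rmult_assoc, Rinv_l by lra. lra. }
  assert (aw k * ((2 * INR k + 1) / (2 * INR k + 2)) <= aw k * 1).
  { apply Rmult_le_compat_l; lra. } lra.
Qed.

Lemma INR_2k k c : INR (2*k+c) = 2 * INR k + INR c.
Proof. rewrite plus_INR, mult_INR. simpl. ring. Qed.

Lemma Iw_aw k : Iw (2*k) = aw k * (PI/2) /\ Iw (2*k+1) * (2 * INR k + 1) * aw k = 1.
Proof.
  induction k as [|k [IH1 IH2]].
  - simpl. rewrite Iw0, Iw1. split; ring.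
  - pose proof (Iw_rec (2*k)) as R1. pose proof (Iw_rec (2*k+1)) as R2.
    rewrite !INR_2k in R1. replace (2*k+1+2)%nat with (2*k+3)%nat in R2 by lia.
    replace (2*k+1+1)%nat with (2*k+2)%nat in R2 by lia. rewrite !INR_2k in R2.
    replace (2*k+2)%nat with (2 * S k)%nat in R1 by lia.
    replace (2*k+3)%nat with (2 * S k + 1)%nat in R2 by lia.
    rewrite S_INR. simpl aw. replace (INR 2) with 2 in R1, R2 by (simpl; ring). replace (INR 1) with 1 in R1, R2 by (simpl; ring). replace (INR 3) with 3 in R2 by (simpl; ring).
    pose proof (pos_INR k). pose proof (aw_pos k).
    split.
    + apply (Rmult_eq_reg_l (2 * INR k + 2)). 2: lra.
      change (INR 1) with 1 in R1. rewrite R1, IH1. field. lra.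
    + replace (2 * (INR k + 1) + 1) with (2 * INR k + 3) by ring.
      replace (Iw (2 * S k + 1) * (2 * INR k + 3)) with ((2 * INR k + 2) * Iw (2 * k + 1)) by lra.
      transitivity (Iw (2 * k + 1) * (2 * INR k + 1) * aw k); [field; lra | exact IH2].
Qed.

Lemma wallis m : PI * INR (S m) * (aw (S m) * aw (S m)) <= 1.
Proof.
  pose proof (Iw_mono (2*m+1)) as Hm.
  replace (S (2*m+1)) with (2 * S m)%nat in Hm by lia.
  destruct (Iw_aw (S m)) as [E1 _]. destruct (Iw_aw m) as [_ E2].
  rewrite E1 in Hm.
  pose proof (pos_INR m). pose proof (aw_pos m). pose proof PI_RGT_0.
  assert (Ha : aw (S m) * INR (S m) * 2 = aw m * (2 * INR m + 1)).
  { simpl aw. rewrite S_INR. field. lra. }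
  assert (H3 : aw (S m) * (PI / 2) * ((2 * INR m + 1) * aw m) <= 1).
  { assert (E3 : Iw (2*m+1) * ((2*INR m+1)*aw m) = 1) by (rewrite <- Rmult_assoc; exact E2).
    apply Rle_trans with (Iw (2*m+1) * ((2*INR m+1)*aw m)); [|lra].
    apply Rmult_le_compat_r; auto.
    apply Rmult_le_pos; lra. }
  replace ((2 * INR m + 1) * aw m) with (aw (S m) * INR (S m) * 2) in H3 by lra.
  lra.
Qed.

Definition bw (n : nat) : R := aw n * (2 * INR n + 1) / 2.

Lemma bw_alt n : bw n = INR (S n) * aw (S n).
Proof. unfold bw. simpl aw. rewrite S_INR. pose proof (pos_INR n). field. lra. Qed.

Lemma bw_nonneg n : 0 <= bw n.
Proof. unfold bw. pose proof (aw_pos n); pose proof (pos_INR n).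
  apply Rmult_le_pos; [apply Rmult_le_pos|]; lra. Qed.

Lemma bw_le n : bw n <= INR (S n).
Proof. unfold bw. rewrite S_INR. pose proof (aw_pos n); pose proof (aw_le1 n); pose proof (pos_INR n).
  assert (aw n * (2 * INR n + 1) <= 1 * (2 * INR n + 1)) by (apply Rmult_le_compat_r; lra). lra. Qed.

Lemma bw_rec n : INR (S n) * bw (S n) - INR n * bw n = 3/2 * bw n.
Proof. unfold bw. simpl aw. rewrite S_INR. pose proof (pos_INR n). field. lra. Qed.

Lemma bw_wallis n : 2 * bw n <= sqrt (4 / PI * INR (S n)).
Proof.
  pose proof (wallis n) as W. rewrite bw_alt.
  pose proof (aw_pos (S n)). pose proof (pos_INR (S n)). pose proof PI_RGT_0.
  rewrite <- (sqrt_square (2 * (INR (S n) * aw (S n)))).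
  2: apply Rmult_le_pos; [lra| apply Rmult_le_pos; lra].
  apply sqrt_le_1_alt.
  replace (4 / PI * INR (S n)) with (4 / PI * (INR (S n) * 1)) by ring.
  apply Rle_trans with (4 / PI * (INR (S n) * (PI * INR (S n) * (aw (S n) * aw (S n))))).
  - right. field. lra.
  - apply Rmult_le_compat_l. unfold Rdiv; apply Rmult_le_pos; [lra|]; left; apply Rinv_0_lt_compat; lra.
    apply Rmult_le_compat_l; lra.
Qed.

Lemma geom2 q : 0 <= q < 1 -> is_series (fun n => INR (S n) * q ^ n) (/ (1 - q) * / (1 - q)).
Proof.
  intros Hq.
  assert (Ha : Rabs q < 1) by (rewrite Rabs_pos_eq; lra).
  assert (Hs := is_series_mult _ _ _ _ (is_series_geom q Ha) (is_series_geom q Ha)).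
  assert (Hex : ex_series (fun n => Rabs (q ^ n))).
  { exists (/ (1 - Rabs q)). apply (is_series_ext (fun n => (Rabs q) ^ n)).
    intros n; rewrite RPow_abs; auto. apply is_series_geom. rewrite Rabs_Rabsolu; auto. }
  specialize (Hs Hex Hex).
  revert Hs. apply is_series_ext. intros n.
  rewrite (sum_eq _ (fun _ => q ^ n)). rewrite sum_cte. apply Rmult_comm.
  intros i Hi. rewrite <- pow_add. f_equal. lia.
Qed.

Lemma bw_radius q : 0 <= q < 1 -> Rbar_lt (Rabs q) (CV_radius bw).
Proof.
  intros Hq. set (r := (1 + q) / 2).
  assert (Hr : CV_disk bw r).
  { unfold CV_disk. apply (ex_series_le (K:=R_AbsRing) (V:=R_CompleteNormedModule) _ (fun n => INR (S n) * r ^ n)).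
    - intros n. change (norm (Rabs (bw n * r ^ n))) with (Rabs (Rabs (bw n * r ^ n))).
      rewrite Rabs_Rabsolu, Rabs_mult, (Rabs_pos_eq (bw n)) by apply bw_nonneg.
      rewrite Rabs_pos_eq by (apply pow_le; unfold r; lra).
      apply Rmult_le_compat_r. apply pow_le; unfold r; lra. apply bw_le.
    - eexists. apply geom2. unfold r; lra. }
  assert (Hle : Rbar_le r (CV_radius bw)).
  { unfold CV_radius. destruct (Lub_Rbar_correct (CV_disk bw)) as [ub _]. apply ub. exact Hr. }
  rewrite Rabs_pos_eq by lra.
  apply Rbar_lt_le_trans with r; auto. simpl. unfold r; lra.
Qed.

Lemma bw_ode x : 0 <= x < 1 -> (1 - x) * PSeries (PS_derive bw) x = 3/2 * PSeries bw x.
Proof.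
  intros Hx. pose proof (bw_radius x Hx) as Hr.
  assert (E1 : ex_pseries (PS_derive bw) x) by (apply ex_pseries_derive; auto).
  assert (E2 := ex_pseries_incr_1 _ _ E1).
  rewrite Rmult_minus_distr_r, Rmult_1_l, <- PSeries_incr_1, <- PSeries_minus by auto.
  rewrite <- PSeries_scal. apply PSeries_ext. intros n.
  unfold PS_minus, PS_scal, PS_incr_1, PS_derive, plus, opp, scal, zero; cbn -[INR bw]; unfold mult; cbn -[INR bw].
  destruct n as [|n].
  - unfold bw. simpl. field.
  - pose proof (bw_rec (S n)). lra.
Qed.

Lemma g_deriv x : 0 <= x < 1 ->
  is_derive (fun t => PSeries bw t * ((1 - t) * sqrt (1 - t))) x 0.
Proof.
  intros Hx.
  assert (Hd1 := is_derive_PSeries bw x (bw_radius x Hx)).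
  assert (Hd2 : is_derive (fun t => (1 - t) * sqrt (1 - t)) x (- (3/2) * sqrt (1 - x))).
  { auto_derive. lra. assert (0 < sqrt (1 - x)) by (apply sqrt_lt_R0; lra).
    pose proof (sqrt_sqrt (1 - x)). replace (1 + - x) with (1 - x) by ring.
    rewrite <- (H0 ltac:(lra)) at 2. field. lra. }
  assert (H := is_derive_mult (K:=R_AbsRing) _ _ x _ _ Hd1 Hd2 Rmult_comm).
  replace 0 with (plus (mult (PSeries (PS_derive bw) x) ((1 - x) * sqrt (1 - x))) (mult (PSeries bw x) (- (3/2) * sqrt (1 - x)))).
  exact H.
  unfold plus, mult; simpl. pose proof (bw_ode x Hx).
  replace (PSeries (PS_derive bw) x * ((1 - x) * sqrt (1 - x))) with (((1 - x) * PSeries (PS_derive bw) x) * sqrt (1 - x)) by ring.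
  rewrite H0. ring.
Qed.

Lemma bw_closed q : 0 <= q < 1 -> PSeries bw q * ((1 - q) * sqrt (1 - q)) = 1/2.
Proof.
  intros Hq.
  destruct (MVT_gen (fun t => PSeries bw t * ((1 - t) * sqrt (1 - t))) 0 q (fun _ => 0)) as [c [_ Hc]].
  - intros x. rewrite Rmin_left, Rmax_right by lra. intros Hx. apply g_deriv; lra.
  - intros x. rewrite Rmin_left, Rmax_right by lra. intros Hx.
    apply (continuity_pt_filterlim (fun t => PSeries bw t * ((1 - t) * sqrt (1 - t))) x).
    exact (ex_derive_continuous (K:=R_AbsRing) (V:=R_NormedModule) _ x (ex_intro _ 0 (g_deriv x ltac:(lra)))).
  - rewrite PSeries_0 in Hc. replace (bw 0) with (1/2) in Hc by (unfold bw; simpl; field). rewrite Rminus_0_r, sqrt_1 in Hc. lra.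
Qed.

Theorem lemma7 (f : R) (hf : 0 < f <= 1) :
  sqrt (geom_expect f (fun k => INR k)) <=
  geom_expect f (fun k => sqrt (d1_const * INR k)).
Proof.
  set (q := 1 - f). assert (Hq : 0 <= q < 1) by (unfold q; lra).
  assert (EX : geom_expect f (fun k => INR k) = / f).
  { unfold geom_expect, geom_pmf.
    rewrite (Series_ext _ (fun n => f * (INR (S n) * q ^ n))).
    2: { intros n. replace (S n - 1)%nat with n by lia. unfold q. ring. }
    rewrite Series_scal_l, (is_series_unique _ _ (geom2 q Hq)). unfold q. field. lra. }
  assert (HB := bw_closed q Hq).
  assert (Hf : 1 - q = f) by (unfold q; ring). rewrite Hf in HB.
  assert (Hs : 0 < sqrt f) by (apply sqrt_lt_R0; lra).
  rewrite EX, sqrt_inv.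
  pose proof PI_RGT_0.
  unfold geom_expect, geom_pmf, d1_const.
  apply Rle_trans with (Series (fun n => f * 2 * (bw n * q ^ n))).
  - rewrite Series_scal_l. change (Series (fun n => bw n * q ^ n)) with (PSeries bw q).
    right. apply (Rmult_eq_reg_r (f * sqrt f)). 2: apply Rgt_not_eq; apply Rmult_lt_0_compat; lra.
    transitivity f. field. lra.
    replace (f * 2 * PSeries bw q * (f * sqrt f)) with (2 * f * (PSeries bw q * (f * sqrt f))) by ring.
    rewrite HB. field.
  - apply Series_le.
    + intros n. replace (S n - 1)%nat with n by lia. fold q.
      pose proof (bw_nonneg n). pose proof (pow_le q n (proj1 Hq)). pose proof (bw_wallis n).
      split.
      * apply Rmult_le_pos; [lra|]. apply Rmult_le_pos; lra.
      * replace (f * 2 * (bw n * q ^ n)) with ((2 * bw n) * (q ^ n * f)) by ring.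
        rewrite (Rmult_comm (q ^ n * f)). apply Rmult_le_compat_r; [apply Rmult_le_pos; lra| lra].
    + apply (ex_series_le (K:=R_AbsRing) (V:=R_CompleteNormedModule) _ (fun n => (f * (4 / PI + 1)) * (INR (S n) * q ^ n))).
      * intros n. change (norm ?x) with (Rabs x). replace (S n - 1)%nat with n by lia. fold q.
        pose proof (pow_le q n (proj1 Hq)). pose proof (pos_INR n). rewrite S_INR.
        assert (H4 : 0 <= 4 / PI) by (unfold Rdiv; apply Rmult_le_pos; [lra| left; apply Rinv_0_lt_compat; lra]).
        set (y := 4 / PI * (INR n + 1)).
        assert (Hy : 0 <= y) by (unfold y; apply Rmult_le_pos; lra).
        pose proof (sqrt_pos y). pose proof (sqrt_sqrt y Hy).
        assert (Hsy : sqrt y <= 4 / PI * (INR n + 1) + (INR n + 1)) by (fold y; nra).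
        rewrite Rabs_pos_eq by (apply Rmult_le_pos; [apply Rmult_le_pos; lra|auto]).
        replace (f * (4 / PI + 1) * ((INR n + 1) * q ^ n)) with ((q ^ n * f) * (4 / PI * (INR n + 1) + (INR n + 1))) by ring.
        apply Rmult_le_compat_l; [apply Rmult_le_pos; lra| auto].
      * apply (ex_series_scal_l (K:=R_AbsRing) (V:=R_NormedModule)). eexists. apply geom2. auto.
Qed.
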